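(* Among the graphs in $\mathcal{C}_3$, exactly $F_0$ and $F_1(5)$ are comparability graphs; that is, $F_0$ and $F_1(5)$ are comparability graphs, while no even $k$-sun ($k\ge4$ even), no $F_1(k)$ with odd $k\ge7$, and no $F_2(k)$ with odd $k\ge5$ is a comparability graph.
   Context: A comparability graph is a graph admitting a transitive orientation. The graphs (split graphs with clique $C$, independent set $I$, and listed neighbourhoods): $F_0$: $C=\{0,c_1,c_2,c_3,c_4\}$, $I=\{a_1,a_2,a_3\}$, $N(a_1)=\{0,c_2,c_3\}$, $N(a_2)=\{0,c_3,c_4\}$, $N(a_3)=\{0,c_1,c_4\}$. Even $k$-sun ($k\ge4$ even): $C=\{c_1,\dots,c_k\}$, $I=\{a_1,\dots,a_k\}$, $N(a_i)=\{c_i,c_{i+1}\}$ ($1\le i\le k-1$), $N(a_k)=\{c_1,c_k\}$. $F_1(k)$ ($k\ge5$ odd): $C=\{c_1,\dots,c_{k-1}\}$, $I=\{b_1,b_2,a_1,\dots,a_{k-2}\}$, $N(b_1)=\{c_1,\dots,c_{k-2}\}$, $N(b_2)=\{c_2,\dots,c_{k-1}\}$, $N(a_i)=\{c_i,c_{i+1}\}$ ($1\le i\le k-2$). $F_2(k)$ ($k\ge5$ odd): $C=\{c_1,\dots,c_k\}$, $I=\{b,a_1,\dots,a_{k-1}\}$, $N(b)=\{c_2,\dots,c_{k-1}\}$, $N(a_i)=\{c_i,c_{i+1}\}$ ($1\le i\le k-1$). $\mathcal{C}_3$ is the family of all these graphs. *)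

(* Defs.v *)
From mathcomp Require Import all_boot.
Set Implicit Arguments. Unset Strict Implicit. Unset Printing Implicit Defensive.

(* A (simple) graph is a symmetric irreflexive relation on a finite type. *)

Definition transitive_orientation (T : finType) (E : rel T) (o : rel T) : Prop :=
  [/\ forall x y, E x y = (o x y || o y x),
      forall x y, o x y -> ~~ o y x
    & transitive o].

Definition comparability_graph (T : finType) (E : rel T) : Prop :=
  exists o : rel T, transitive_orientation E o.

Definition split_graph (C I : finType) (nb : I -> C -> bool) : rel (C + I) :=
  fun u v => match u, v with
  | inl x, inl y => x != y
  | inl x, inr a => nb a x
  | inr a, inl x => nb a x
  | inr _, inr _ => false
  end.

(* F_0: clique 'I_5 with index 0 = vertex "0" and index i = c_i (1<=i<=4);
   independent set 'I_3 with index j = a_(j+1). *)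
Definition F0_nb (a : 'I_3) (x : 'I_5) : bool :=
  (x : nat) \in nth [::] [:: [:: 0; 2; 3]; [:: 0; 3; 4]; [:: 0; 1; 4]] a.
Definition F0 : rel ('I_5 + 'I_3) := split_graph F0_nb.

(* Even k-sun: clique 'I_k, index i = c_(i+1); independent 'I_k, index j = a_(j+1).
   a_(j+1) is adjacent to c_(j+1) and c_(j+2) (indices taken cyclically,
   so a_k is adjacent to c_k and c_1). *)
Definition sun_nb (k : nat) (a : 'I_k) (x : 'I_k) : bool :=
  ((x : nat) == a) || ((x : nat) == (a.+1 %% k)).
Definition sun (k : nat) : rel ('I_k + 'I_k) := split_graph (@sun_nb k).

(* F_1(k): clique 'I_(k-1), index i = c_(i+1);
   independent set bool + 'I_(k-2): inl false = b_1, inl true = b_2,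
   inr j = a_(j+1). *)
Definition F1_nb (k : nat) (v : bool + 'I_(k - 2)) (x : 'I_(k - 1)) : bool :=
  match v with
  | inl false => (x : nat) < k - 2          (* c_1 .. c_(k-2) *)
  | inl true => 1 <= (x : nat)              (* c_2 .. c_(k-1) *)
  | inr j => ((x : nat) == j) || ((x : nat) == j.+1)  (* c_(j+1), c_(j+2) *)
  end.
Definition F1 (k : nat) : rel ('I_(k - 1) + (bool + 'I_(k - 2))) :=
  split_graph (@F1_nb k).

(* F_2(k): clique 'I_k, index i = c_(i+1);
   independent set option 'I_(k-1): None = b, Some j = a_(j+1). *)
Definition F2_nb (k : nat) (v : option 'I_(k - 1)) (x : 'I_k) : bool :=
  match v with
  | None => (1 <= (x : nat)) && ((x : nat) <= k - 2)   (* c_2 .. c_(k-1) *)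
  | Some j => ((x : nat) == j) || ((x : nat) == j.+1)  (* c_(j+1), c_(j+2) *)
  end.
Definition F2 (k : nat) : rel ('I_k + option 'I_(k - 1)) := split_graph (@F2_nb k).

Arguments sun k : clear implicits.
Arguments F1 k : clear implicits.
Arguments F2 k : clear implicits.

(* Main.v *)
Require Import Defs.
From mathcomp Require Import all_boot zify.

Definition code0 (v : 'I_5 + 'I_3) : nat := match v with inl x => x | inr a => 5 + a end.
Definition o0 : rel ('I_5 + 'I_3) := fun u v => (code0 u, code0 v) \in
  [:: (1, 0); (1, 4); (2, 0); (2, 1); (2, 4); (2, 5); (3, 0); (3, 1); (3, 2); (3, 4); (3, 5); (3, 6); (4, 0); (5, 0); (6, 0); (6, 4); (7, 0); (7, 1); (7, 4)].

Ltac d0 x := case: x => [[[|[|[|[|[|?]]]]] ?] | [[|[|[|?]]] ?]] //.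

Lemma F0ok : comparability_graph F0.
Proof. exists o0; split.
- by move=> x y; d0 x; d0 y.
- by move=> x y; d0 x; d0 y.
- by move=> y x z; d0 x; d0 y; d0 z.
Qed.

Definition code1 (v : 'I_(5-1) + (bool + 'I_(5-2))) : nat :=
  match v with inl x => x | inr (inl false) => 4 | inr (inl true) => 5 | inr (inr j) => 6 + j end.
Definition o1 : rel ('I_(5-1) + (bool + 'I_(5-2))) := fun u v => (code1 u, code1 v) \in
  [:: (0, 2); (0, 3); (0, 4); (0, 6); (1, 0); (1, 2); (1, 3); (1, 4); (1, 5); (1, 6); (1, 7); (3, 2); (4, 2); (5, 2); (5, 3); (7, 2); (8, 2); (8, 3)].

Ltac d1 x := case: x => [[[|[|[|[|?]]]] ?] | [[|] | [[|[|[|?]]] ?]]] //.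

Lemma F1ok : comparability_graph (F1 5).
Proof. exists o1; split.
- by move=> x y; d1 x; d1 y.
- by move=> x y; d1 x; d1 y.
- by move=> y x z; d1 x; d1 y; d1 z.
Qed.

Section G.
Variables (T : finType) (E o : rel T).
Hypothesis (Ho : transitive_orientation E o).

Lemma force x w y : E x w -> E x y -> ~~ E w y -> o x w = o x y.
Proof.
case: Ho => tot asym tr Exw Exy Nwy.
have Eyw : ~~ E y w by rewrite tot orbC -tot.
case Hxw: (o x w); case Hxy: (o x y) => //.
- move: Exy; rewrite tot Hxy /= => Hyx.
  by move: Eyw; rewrite tot (tr _ _ _ Hyx Hxw).
- move: Exw; rewrite tot Hxw /= => Hwx.
  by move: Nwy; rewrite tot (tr _ _ _ Hwx Hxy).
Qed.

Lemma edge_neg x y : E x y -> o y x = ~~ o x y.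
Proof.
case: Ho => tot asym _; rewrite tot.
case Hxy: (o x y) => /=; last by [].
by move=> _; apply/negbTE/asym.
Qed.
End G.

Lemma tri_bad (T : finType) (E : rel T) x y z wx wy wz :
  E x y -> E y z -> E x z ->
  E x wx -> ~~ E wx y -> ~~ E wx z ->
  E y wy -> ~~ E wy x -> ~~ E wy z ->
  E z wz -> ~~ E wz x -> ~~ E wz y -> ~ comparability_graph E.
Proof.
move=> Exy Eyz Exz Ex1 N11 N12 Ey1 N21 N22 Ez1 N31 N32 [o Ho].
have Eyx : E y x by case: Ho => tot _ _; rewrite tot orbC -tot.
have Ezy : E z y by case: Ho => tot _ _; rewrite tot orbC -tot.
have Ezx : E z x by case: Ho => tot _ _; rewrite tot orbC -tot.
have h1 : o x y = o x z by rewrite -(@force T E o Ho _ _ _ Ex1 Exy N11) (@force T E o Ho _ _ _ Ex1 Exz N12).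
have h2 : o y x = o y z by rewrite -(@force T E o Ho _ _ _ Ey1 Eyx N21) (@force T E o Ho _ _ _ Ey1 Eyz N22).
have h3 : o z x = o z y by rewrite -(@force T E o Ho _ _ _ Ez1 Ezx N31) (@force T E o Ho _ _ _ Ez1 Ezy N32).
move: h2 h3; rewrite (@edge_neg T E o Ho _ _ Exy) (@edge_neg T E o Ho _ _ Exz) (@edge_neg T E o Ho _ _ Eyz) h1.
move=> h2 h3; move: h3; rewrite -h2 negbK; by case: (o x z).
Qed.

Lemma sun_big k : 6 <= k -> ~ comparability_graph (sun k).
Proof.
move=> hk.
have h0 : 0 < k by apply: leq_trans hk.
have h2 : 2 < k by apply: leq_trans hk.
have h4 : 4 < k by apply: leq_trans hk.
have m1 : 1 %% k = 1 by rewrite modn_small // (leq_trans _ hk).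
have m3 : 3 %% k = 3 by rewrite modn_small // (leq_trans _ hk).
have m5 : 5 %% k = 5 by rewrite modn_small // (leq_trans _ hk).
apply: (@tri_bad _ _ (inl (Ordinal h0)) (inl (Ordinal h2)) (inl (Ordinal h4))
   (inr (Ordinal h0)) (inr (Ordinal h2)) (inr (Ordinal h4)));
  rewrite /sun /= /sun_nb /= ?m1 ?m3 ?m5 //.
Qed.

Lemma F1_big k : 7 <= k -> ~ comparability_graph (F1 k).
Proof.
move=> hk.
have h0 : 0 < k - 2 by rewrite ltn_subRL addn0 (leq_trans _ hk).
have h2 : 2 < k - 2 by rewrite ltn_subRL (leq_trans _ hk).
have h4 : 4 < k - 2 by rewrite ltn_subRL (leq_trans _ hk).
have g0 : 0 < k - 1 by rewrite ltn_subRL addn0 (leq_trans _ hk).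
have g2 : 2 < k - 1 by rewrite ltn_subRL (leq_trans _ hk).
have g4 : 4 < k - 1 by rewrite ltn_subRL (leq_trans _ hk).
apply: (@tri_bad _ _ (inl (Ordinal g0)) (inl (Ordinal g2)) (inl (Ordinal g4))
   (inr (inr (Ordinal h0))) (inr (inr (Ordinal h2))) (inr (inr (Ordinal h4))));
  rewrite /F1 /= //.
Qed.

Lemma F2_big k : 5 <= k -> ~ comparability_graph (F2 k).
Proof.
move=> hk.
have g0 : 0 < k by rewrite (leq_trans _ hk).
have g2 : 2 < k by rewrite (leq_trans _ hk).
have gk : k.-1 < k by rewrite prednK // (leq_trans _ hk).
have h0 : 0 < k - 1 by rewrite ltn_subRL addn0 (leq_trans _ hk).
have h1 : 1 < k - 1 by rewrite ltn_subRL (leq_trans _ hk).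
have hk2 : k - 2 < k - 1 by rewrite ltn_sub2l // (leq_trans _ hk).
apply: (@tri_bad _ _ (inl (Ordinal g0)) (inl (Ordinal g2)) (inl (Ordinal gk))
   (inr (Some (Ordinal h0))) (inr (Some (Ordinal h1))) (inr (Some (Ordinal hk2))));
  rewrite /F2 /= //.
all: rewrite -?val_eqE /=; lia.
Qed.

Lemma adj_bad (T : finType) (E o : rel T) x y p q :
  transitive_orientation E o ->
  E x y -> E x p -> E y q -> ~~ E p y -> ~~ E q x -> o x p = o y q -> False.
Proof.
case=> tot asym tr Exy Exp Eyq Npy Nqx.
case Hxp: (o x p); case Hyq: (o y q) => // _.
- move: Exy; rewrite tot; case/orP=> h.
  + by move: Nqx; rewrite tot (tr _ _ _ h Hyq) orbT.
  + by move: Npy; rewrite tot (tr _ _ _ h Hxp) orbT.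
- move: Exy; rewrite tot; case/orP=> h.
  + move: Exp; rewrite tot Hxp /= => hpx.
    by move: Npy; rewrite tot (tr _ _ _ hpx h).
  + move: Eyq; rewrite tot Hyq /= => hqy.
    by move: Nqx; rewrite tot (tr _ _ _ hqy h).
Qed.

Lemma sun4 : ~ comparability_graph (sun 4).
Proof.
case=> o Ho.
pose c0 : 'I_4 + 'I_4 := inl (@Ordinal 4 0 isT).
pose a0 : 'I_4 + 'I_4 := inr (@Ordinal 4 0 isT).
pose c1 : 'I_4 + 'I_4 := inl (@Ordinal 4 1 isT).
pose a1 : 'I_4 + 'I_4 := inr (@Ordinal 4 1 isT).
pose c2 : 'I_4 + 'I_4 := inl (@Ordinal 4 2 isT).
pose a2 : 'I_4 + 'I_4 := inr (@Ordinal 4 2 isT).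
pose c3 : 'I_4 + 'I_4 := inl (@Ordinal 4 3 isT).
pose a3 : 'I_4 + 'I_4 := inr (@Ordinal 4 3 isT).
have e1 := @force _ _ _ Ho c0 a3 c2 isT isT isT.
have e2 := @force _ _ _ Ho c1 a0 c3 isT isT isT.
have e3 := @force _ _ _ Ho c1 a1 c3 isT isT isT.
have e4 := @force _ _ _ Ho c2 a2 c0 isT isT isT.
have e5 := @edge_neg _ _ _ Ho c0 c2 isT.
have L1 := @adj_bad _ _ _ c0 c1 a3 a1 Ho isT isT isT isT isT.
have L2 := @adj_bad _ _ _ c1 c2 a0 a2 Ho isT isT isT isT isT.
move: L1 L2; rewrite e1 e2 e3 e4 e5.
by case: (o c0 c2); case: (o c1 c3) => //; move=> h; exfalso; apply: h.
Qed.

Theorem theorem7 :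
  [/\ comparability_graph F0,
      comparability_graph (F1 5),
      (forall k : nat, 4 <= k -> ~~ odd k -> ~ comparability_graph (sun k)),
      (forall k : nat, 7 <= k -> odd k -> ~ comparability_graph (F1 k))
    & (forall k : nat, 5 <= k -> odd k -> ~ comparability_graph (F2 k))].
Proof.
split.
- exact: F0ok.
- exact: F1ok.
- move=> k hk hodd.
  case: (ltngtP k 5) => h.
  + have -> : k = 4 by apply/eqP; rewrite eqn_leq hk -ltnS h.
    exact: sun4.
  + by apply: sun_big.
  + by rewrite h in hodd.
- by move=> k hk _; apply: F1_big.
- by move=> k hk _; apply: F2_big.
Qed.
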